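(* Let $\sigma$ be a 2-structure and $X\subsetneq V(\sigma)$ with $\sigma[X]$ prime; write $\overline{X}=V(\sigma)\setminus X$ and $\Gamma=\Gamma_{(\sigma,\overline{X})}$. Suppose Statement (S3) holds (there is no $Y\subseteq\overline{X}$ with $|Y|=3$ and $\sigma[X\cup Y]$ prime). Let $B_q\in q_{(\sigma,\overline{X})}$. For each $v\in\overline{X}\setminus B_q$, the sets $N^+_v=\{x\in B_q:\{x,v\}\in E(\Gamma)\}$ and $N^-_v=\{x\in B_q:\{x,v\}\notin E(\Gamma)\}$ are modules of $\sigma[B_q]$. Moreover, if $N^+_v\neq\emptyset$ and $N^-_v\neq\emptyset$, then: (1) if $B_q=\langle X\rangle^{(e,f)}_\sigma$ with $e,f\in E(\sigma)$, then $(z,x)\in e$ and $(x,z)\in f$ for all $z\in N^-_v$, $x\in N^+_v$; (2) if $B_q=X^{(e,f)}_\sigma(\alpha)$ with $\alpha\in X$ and $e,f\in E(\sigma)$, then $(z,x)\in f$ and $(x,z)\in e$ for all $z\in N^-_v$, $x\in N^+_v$.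
   Context: A 2-structure $\sigma$ consists of a vertex set $V(\sigma)$ and an equivalence relation $\equiv_\sigma$ on ordered pairs of distinct vertices; $E(\sigma)$ is its set of classes; $\sigma[W]$ is the induced 2-structure on $W$. A module is a set $M$ such that for all $x,y\in M$ and $v\notin M$, $(x,v)\equiv_\sigma(y,v)$ and $(v,x)\equiv_\sigma(v,y)$; $\sigma$ is prime if $|V(\sigma)|\geq3$ and its only modules are $\emptyset$, $V(\sigma)$ and singletons. Given $\sigma[X]$ prime: ${\rm Ext}_\sigma(X)=\{v\in\overline{X}:\sigma[X\cup\{v\}]\text{ prime}\}$; $\langle X\rangle_\sigma=\{v\in\overline{X}: X\text{ is a module of }\sigma[X\cup\{v\}]\}$; for $\alpha\in X$, $X_\sigma(\alpha)=\{v\in\overline{X}:\{\alpha,v\}\text{ is a module of }\sigma[X\cup\{v\}]\}$. For $e,f\in E(\sigma)$: $\langle X\rangle^{(e,f)}_\sigma=\{v\in\langle X\rangle_\sigma:(v,\alpha)\in e,(\alpha,v)\in f\}$ for any $\alpha\in X$; $X^{(e,f)}_\sigma(\alpha)=\{v\in X_\sigma(\alpha):(v,\alpha)\in e,(\alpha,v)\in f\}$. $q_{(\sigma,\overline{X})}$ is the partition of $\overline{X}$ formed by the nonempty sets among ${\rm Ext}_\sigma(X)$, $\langle X\rangle^{(e,f)}_\sigma$, $X^{(e,f)}_\sigma(\alpha)$ ($e,f\in E(\sigma)$, $\alpha\in X$). The outside graph $\Gamma_{(\sigma,\overline{X})}$ has vertex set $\overline{X}$ and edges the 2-element sets $Y\subseteq\overline{X}$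 with $\sigma[X\cup Y]$ prime. *)

(* Defs.v *)
(* A (finite) 2-structure on the vertex set V(sigma) = T
   (a finType) is given by a boolean relation [eqv] on ordered pairs,
   required to be an equivalence relation on pairs of distinct vertices. *)
From mathcomp Require Import all_boot.
Set Implicit Arguments.
Unset Strict Implicit.
Unset Printing Implicit Defensive.

Section TwoStructures.
Variable T : finType.
Variable eqv : rel (T * T).

Definition offdiag (p : T * T) : bool := p.1 != p.2.

Definition is_2structure : Prop :=
  [/\ (forall p, offdiag p -> eqv p p),
      (forall p q, offdiag p -> offdiag q -> eqv p q -> eqv q p) &
      (forall p q r, offdiag p -> offdiag q -> offdiag r ->
           eqv p q -> eqv q r -> eqv p r)].

Definition eclass (p : T * T) : {set T * T} :=
  [set q | offdiag q & eqv p q].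

Definition is_class (e : {set T * T}) : Prop :=
  exists2 p, offdiag p & e = eclass p.

Definition module (W M : {set T}) : bool :=
  (M \subset W) &&
  [forall x in M, forall y in M, forall v in W :\: M,
      eqv (x, v) (y, v) && eqv (v, x) (v, y)].

Definition prime2 (W : {set T}) : bool :=
  (2 < #|W|) &&
  [forall M : {set T}, module W M ==>
      [|| M == set0, M == W | #|M| == 1]].

Section Outside.
Variable X : {set T}.

Definition Ext : {set T} := [set v | (v \notin X) && prime2 (v |: X)].

Definition spanX : {set T} := [set v | (v \notin X) && module (v |: X) X].

Definition Xal (a : T) : {set T} :=
  [set v | (v \notin X) && module (v |: X) [set a; v]].

(* <X>^(e,f)_sigma ; alpha ranges over X (the choice of alpha is irrelevant
   for v in <X>_sigma, we require it for every alpha in X) *)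
Definition spanXef (e f : {set T * T}) : {set T} :=
  [set v in spanX | [forall a in X, ((v, a) \in e) && ((a, v) \in f)]].

Definition Xalef (a : T) (e f : {set T * T}) : {set T} :=
  [set v in Xal a | ((v, a) \in e) && ((a, v) \in f)].

Definition in_q (B : {set T}) : Prop :=
  B != set0 /\
  (B = Ext \/
   exists e f, [/\ is_class e, is_class f &
     (B = spanXef e f \/ exists2 a, a \in X & B = Xalef a e f)]).

Definition gamma_edge (u w : T) : bool :=
  [&& u \notin X, w \notin X, u != w & prime2 (X :|: [set u; w])].

Definition S3 : Prop :=
  ~ exists Y : {set T},
      [/\ Y \subset ~: X, #|Y| = 3 & prime2 (X :|: Y)].

End Outside.
End TwoStructures.

(* Main.v *)
Require Import Defs.
From mathcomp Require Import all_boot.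
Set Implicit Arguments. Unset Strict Implicit. Unset Printing Implicit Defensive.

Lemma eqv_refl (T : finType) (eqv : rel (T * T)) p :
  is_2structure eqv -> offdiag p -> eqv p p.
Proof. by case=> H _ _; apply: H. Qed.

Lemma eqv_sym (T : finType) (eqv : rel (T * T)) p q :
  is_2structure eqv -> offdiag p -> offdiag q -> eqv p q -> eqv q p.
Proof. by case=> _ H _; apply: H. Qed.

Lemma eqv_trans (T : finType) (eqv : rel (T * T)) p q r :
  is_2structure eqv -> offdiag p -> offdiag q -> offdiag r ->
  eqv p q -> eqv q r -> eqv p r.
Proof. by case=> _ _ H; apply: H. Qed.

Lemma eqv_congr (T : finType) (eqv : rel (T * T)) p q p' q' :
  is_2structure eqv -> offdiag p -> offdiag q -> offdiag p' -> offdiag q' ->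
  eqv p p' -> eqv q q' -> eqv p q -> eqv p' q'.
Proof.
move=> E dp dq dp' dq' pp' qq' pq.
apply: (eqv_trans E dp' dp dq') (eqv_sym E dp dp' pp') _.
exact: (eqv_trans E dp dq dq').
Qed.

Lemma in_class (T : finType) (eqv : rel (T * T)) e p q :
  is_2structure eqv -> is_class eqv e -> p \in e -> offdiag q -> eqv p q -> q \in e.
Proof.
move=> E [r dr ->]; rewrite !inE => /andP[dp rp] dq pq.
by rewrite dq /=; apply: (eqv_trans E dr dp dq).
Qed.

Lemma class_eqv (T : finType) (eqv : rel (T * T)) e p q :
  is_2structure eqv -> is_class eqv e -> p \in e -> q \in e -> eqv p q.
Proof.
move=> E [r dr ->]; rewrite !inE => /andP[dp rp] /andP[dq rq].
exact: (eqv_trans E dp dr dq (eqv_sym E dr dp rp) rq).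
Qed.

Lemma moduleP (T : finType) (eqv : rel (T * T)) (W M : {set T}) :
  module eqv W M <-> (M \subset W /\ forall x y w, x \in M -> y \in M -> w \in W ->
     w \notin M -> eqv (x,w) (y,w) && eqv (w,x) (w,y)).
Proof.
rewrite /module; split.
- case/andP=> sMW /forallP H; split=> // x y w xM yM wW wM.
  move: (H x); rewrite xM /= => /forallP/(_ y); rewrite yM /= => /forallP/(_ w).
  by rewrite inE wM wW.
- case=> sMW H; rewrite sMW /=; apply/forallP=> x; apply/implyP=> xM.
  apply/forallP => y; apply/implyP=> yM; apply/forallP=> w; apply/implyP.
  rewrite inE => /andP[wM wW]; exact: H.
Qed.

Lemma module_restrict (T : finType) (eqv : rel (T * T)) (W W' M : {set T}) :
  W \subset W' -> module eqv W' M -> module eqv W (M :&: W).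
Proof.
move=> sW /moduleP [sM H]; apply/moduleP; split; first exact: subsetIr.
move=> x y w; rewrite !inE => /andP[xM _] /andP[yM _] wW.
rewrite wW andbT => wM; apply: H => //; exact: (subsetP sW).
Qed.

Lemma prime2P (T : finType) (eqv : rel (T * T)) (W M : {set T}) :
  prime2 eqv W -> module eqv W M -> [\/ M = set0, M = W | #|M| = 1].
Proof.
case/andP=> _ /forallP/(_ M) /implyP H /H.
by case/or3P => /eqP ->; [constructor 1|constructor 2|constructor 3].
Qed.

Lemma prime_card (T : finType) (eqv : rel (T * T)) (W : {set T}) :
  prime2 eqv W -> 2 < #|W|.
Proof. by case/andP. Qed.

Lemma prime_contra (T : finType) (eqv : rel (T * T)) (W M : {set T}) :
  prime2 eqv W -> module eqv W M -> M != set0 -> M != W -> #|M| != 1 -> False.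
Proof.
move=> pW mM; case: (prime2P pW mM) => ->; first by rewrite eqxx.
  by rewrite eqxx.
by rewrite eqxx.
Qed.

Definition twin (T : finType) (eqv : rel (T * T)) (u w : T) (S : {set T}) :=
  forall s, s \in S -> s != u -> s != w -> eqv (u,s) (w,s) && eqv (s,u) (s,w).

Lemma twin_sym (T : finType) (eqv : rel (T * T)) (u w : T) (S : {set T}) :
  is_2structure eqv -> twin eqv u w S -> twin eqv w u S.
Proof.
move=> E H s sS sw su; case/andP: (H s sS su sw) => h1 h2.
have sw' : w != s by rewrite eq_sym.
have su' : u != s by rewrite eq_sym.
by apply/andP; split; [apply: (eqv_sym E _ _ h1) | apply: (eqv_sym E _ _ h2)].
Qed.

Lemma twin_sub (T : finType) (eqv : rel (T * T)) (u w : T) (S S' : {set T}) :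
  S' \subset S -> twin eqv u w S -> twin eqv u w S'.
Proof. by move=> sS H s sS'; apply: H; apply: (subsetP sS). Qed.

Lemma twin_module (T : finType) (eqv : rel (T * T)) (u w : T) (S : {set T}) :
  is_2structure eqv -> u \in S -> w \in S -> twin eqv u w S -> module eqv S [set u; w].
Proof.
move=> E uS wS H; apply/moduleP; split.
  by apply/subsetP => t; rewrite !inE => /orP[]/eqP->.
move=> x y t; rewrite !inE => /orP[]/eqP-> /orP[]/eqP-> tS /norP[tu tw].
- by apply/andP; split; apply: eqv_refl => //; rewrite /offdiag /= eq_sym.
- exact: H.
- exact: (twin_sym E H).
- by apply/andP; split; apply: eqv_refl => //; rewrite /offdiag /= eq_sym.
Qed.

Lemma module_twin (T : finType) (eqv : rel (T * T)) (u w : T) (S : {set T}) :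
  module eqv S [set u; w] -> twin eqv u w S.
Proof.
case/moduleP=> _ H s sS su sw; apply: H; rewrite ?inE ?eqxx ?orbT //.
by rewrite negb_or su sw.
Qed.

Definition sw (T : eqType) (u w t : T) := if t == u then w else if t == w then u else t.

Lemma swK (T : eqType) (u w : T) : involutive (sw u w).
Proof.
move=> t; rewrite /sw; have [->|tu] := eqVneq t u.
  by rewrite eqxx; have [->|wu] := eqVneq w u; rewrite ?eqxx.
have [?|tw] := eqVneq t w; first by subst t; rewrite ?eqxx.
by rewrite ?(negbTE tu) ?(negbTE tw).
Qed.

Lemma swC (T : eqType) (u w : T) : sw w u =1 sw u w.
Proof.
move=> t; rewrite /sw; have [->|tu] := eqVneq t u.
  by rewrite ?eqxx; have [->|wu] := eqVneq w u; rewrite ?eqxx.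
have [?|tw] := eqVneq t w; first by subst t; rewrite ?eqxx ?(negbTE tu).
by rewrite ?(negbTE tu) ?(negbTE tw).
Qed.

Lemma swL (T : eqType) (u w : T) : sw u w u = w.
Proof. by rewrite /sw eqxx. Qed.

Lemma swD (T : eqType) (u w t : T) : t != u -> t != w -> sw u w t = t.
Proof. by rewrite /sw => /negbTE -> /negbTE ->. Qed.

Lemma sw_inj (T : eqType) (u w : T) : injective (sw u w).
Proof. exact: inv_inj (swK u w). Qed.

Lemma sw_img (T : finType) (u w : T) (S : {set T}) :
  u \notin S -> w \notin S -> sw u w @: (u |: S) = w |: S.
Proof.
move=> uS wS; rewrite imsetU1 swL; congr (_ |: _).
rewrite -[RHS]imset_id; apply: eq_in_imset => t tS; apply: swD.
  by apply: contraNneq uS => <-.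
by apply: contraNneq wS => <-.
Qed.

Lemma sw_eqv (T : finType) (eqv : rel (T * T)) (u w : T) (S : {set T}) t1 t2 :
  is_2structure eqv -> twin eqv u w S -> u \notin S -> w \notin S ->
  t1 \in u |: S -> t2 \in u |: S -> t1 != t2 ->
  eqv (t1,t2) (sw u w t1, sw u w t2).
Proof.
move=> E H uS wS; rewrite !inE.
have neS : forall t a, a \notin S -> t \in S -> t != a.
  by move=> t a aS tS; apply: contraNneq aS => <-.
case/orP=> [/eqP->|t1S]; case/orP=> [/eqP->|t2S]; rewrite ?eqxx // => d.
- rewrite swL swD ?neS //.
  by case/andP: (H t2 t2S (neS _ _ uS t2S) (neS _ _ wS t2S)).
- rewrite swL swD ?neS //.
  by case/andP: (H t1 t1S (neS _ _ uS t1S) (neS _ _ wS t1S)).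
- by rewrite !swD ?neS //; apply: eqv_refl.
Qed.

Lemma sw_module (T : finType) (eqv : rel (T * T)) (u w : T) (S M : {set T}) :
  is_2structure eqv -> twin eqv u w S -> u \notin S -> w \notin S ->
  module eqv (u |: S) M -> module eqv (w |: S) (sw u w @: M).
Proof.
move=> E H uS wS /moduleP [sM HM]; apply/moduleP; split.
  by rewrite -(sw_img uS wS); apply: imsetS.
move=> x' y' t' /imsetP [x xM ->] /imsetP [y yM ->].
rewrite -(sw_img uS wS) => /imsetP [t tS ->] tM.
have tM' : t \notin M by apply: contra tM => tM; apply: imset_f.
have xt : x != t by apply: contraNneq tM' => <-.
have yt : y != t by apply: contraNneq tM' => <-.
have xS := subsetP sM x xM; have yS := subsetP sM y yM.
have dd : forall a b, a != b -> offdiag (sw u w a, sw u w b).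
  by move=> a b ab; rewrite /offdiag /= (inj_eq (@sw_inj _ u w)).
have od : forall a b : T, a != b -> offdiag (a, b) by [].
case/andP: (HM x y t xM yM tS tM') => h1 h2; apply/andP; split.
- apply: (eqv_congr E (od _ _ xt) (od _ _ yt) (dd _ _ xt) (dd _ _ yt)) h1.
    exact: (sw_eqv E H uS wS xS tS xt).
  exact: (sw_eqv E H uS wS yS tS yt).
- have tx : t != x by rewrite eq_sym.
  have ty : t != y by rewrite eq_sym.
  apply: (eqv_congr E (od _ _ tx) (od _ _ ty) (dd _ _ tx) (dd _ _ ty)) h2.
    exact: (sw_eqv E H uS wS tS xS tx).
  exact: (sw_eqv E H uS wS tS yS ty).
Qed.

Lemma sw_prime (T : finType) (eqv : rel (T * T)) (u w : T) (S : {set T}) :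
  is_2structure eqv -> twin eqv u w S -> u \notin S -> w \notin S ->
  prime2 eqv (u |: S) -> prime2 eqv (w |: S).
Proof.
move=> E H uS wS /andP [c /forallP P]; apply/andP; split.
  by rewrite -(sw_img uS wS) card_imset //; apply: sw_inj.
apply/forallP=> M; apply/implyP=> mM.
have := sw_module E (twin_sym E H) wS uS mM.
rewrite (eq_imset _ (swC u w)) => mM0.
have eM : M = sw u w @: (sw u w @: M).
  by rewrite -imset_comp -[LHS]imset_id; apply: eq_imset => t /=; rewrite swK.
move: (P (sw u w @: M)); rewrite mM0 /= => /or3P [] /eqP e; rewrite eM.
- by rewrite e imset0 eqxx.
- by rewrite e (sw_img uS wS) eqxx orbT.
- by rewrite card_imset ?e ?eqxx ?orbT //; apply: sw_inj.
Qed.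

Lemma neS (T : finType) (t a : T) (S : {set T}) : a \notin S -> t \in S -> t != a.
Proof. by move=> aS tS; apply: contraNneq aS => <-. Qed.

Lemma span_xal_false (T : finType) (eqv : rel (T * T)) (X : {set T}) al z :
  is_2structure eqv -> prime2 eqv X -> al \in X -> z \notin X ->
  (forall b c, b \in X -> c \in X -> eqv (b,z) (c,z) && eqv (z,b) (z,c)) ->
  twin eqv al z X -> False.
Proof.
move=> E pX alX zX Hs Ht.
have cX := prime_card pX.
apply: (prime_contra pX (M := X :\ al)).
- apply/moduleP; split; first exact: subD1set.
  move=> x y t; rewrite !inE => /andP[xa xX] /andP[ya yX] tX.
  rewrite tX andbT negbK => /eqP ->.
  have xz := neS zX xX; have yz := neS zX yX.
  have zx : z != x by rewrite eq_sym. have zy : z != y by rewrite eq_sym.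
  have ax : al != x by rewrite eq_sym. have ay : al != y by rewrite eq_sym.
  case/andP: (Ht x xX xa xz) => h1 h2.
  case/andP: (Ht y yX ya yz) => h3 h4.
  case/andP: (Hs x y xX yX) => h5 h6.
  apply/andP; split.
  + apply: (eqv_trans E (q := (y, z))) => //.
      exact: (eqv_trans E (q := (x, z))).
    exact: (eqv_sym E).
  + apply: (eqv_trans E (q := (z, y))) => //.
      exact: (eqv_trans E (q := (z, x))).
    exact: (eqv_sym E).
- rewrite -card_gt0; move: cX; rewrite (cardsD1 al X) alX; case: #|_|.
    by []. by [].
- by apply/eqP => /setP/(_ al); rewrite !inE eqxx alX.
- by move: cX; rewrite (cardsD1 al X) alX; case: #|_| => // [[]].
Qed.

Lemma xal_xal_false (T : finType) (eqv : rel (T * T)) (X : {set T}) a al z :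
  is_2structure eqv -> prime2 eqv X -> a \in X -> al \in X -> a != al -> z \notin X ->
  twin eqv a z X -> twin eqv al z X -> False.
Proof.
move=> E pX aX alX aal zX H1 H2.
have cX := prime_card pX.
have H : twin eqv a al X.
  move=> s sX sa sal; have sz := neS zX sX.
  have zs : z != s by rewrite eq_sym. have as_ : a != s by rewrite eq_sym.
  have als : al != s by rewrite eq_sym.
  case/andP: (H1 s sX sa sz) => h1 h2; case/andP: (H2 s sX sal sz) => h3 h4.
  apply/andP; split.
    apply: (eqv_trans E (q := (z, s))) => //; exact: (eqv_sym E).
  apply: (eqv_trans E (q := (s, z))) => //; exact: (eqv_sym E).
apply: (prime_contra pX (twin_module E aX alX H)).
- by apply/set0Pn; exists a; rewrite !inE eqxx.
- by apply/eqP => e; move: cX; rewrite -e cards2 aal.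
- by rewrite cards2 aal.
Qed.

Lemma ext_false1 (T : finType) (eqv : rel (T * T)) (X : {set T}) z :
  prime2 eqv X -> z \notin X -> prime2 eqv (z |: X) -> module eqv (z |: X) X -> False.
Proof.
move=> pX zX pZ mX; have cX := prime_card pX.
apply: (prime_contra pZ mX).
- by rewrite -card_gt0; apply: leq_trans cX.
- by apply/eqP => /setP/(_ z); rewrite !inE eqxx (negbTE zX).
- by apply/eqP => e; move: cX; rewrite e.
Qed.

Lemma ext_false2 (T : finType) (eqv : rel (T * T)) (X : {set T}) z al :
  is_2structure eqv -> prime2 eqv X -> z \notin X -> al \in X ->
  prime2 eqv (z |: X) -> twin eqv al z (z |: X) -> False.
Proof.
move=> E pX zX alX pZ H; have cX := prime_card pX.
have az := neS zX alX.
have m := twin_module E (setU1r z alX) (setU11 z X) H.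
apply: (prime_contra pZ m).
- by apply/set0Pn; exists al; rewrite !inE eqxx.
- apply/eqP => e; move: (cardsU1 z X); rewrite -e cards2 az zX add1n => -[h].
  by rewrite -h in cX.
- by rewrite cards2 az.
Qed.

Lemma key (T : finType) (eqv : rel (T * T)) (X : {set T}) x z v :
  is_2structure eqv -> prime2 eqv X -> S3 eqv X ->
  x \notin X -> z \notin X -> v \notin X -> x != z -> z != v ->
  gamma_edge eqv X x v -> ~~ gamma_edge eqv X z v ->
  [\/ (forall a b, a \in X :|: [set x; v] -> b \in X :|: [set x; v] ->
         eqv (a,z) (b,z) && eqv (z,a) (z,b)),
      (exists2 al, al \in X & twin eqv al z (X :|: [set x; z; v])) |
      twin eqv v z (X :|: [set x; z; v])].
Proof.
move=> E pX S3X xX zX vX xz zv gxv ngzv.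
case/and4P: (gxv) => _ _ xv pW.
have cX := prime_card pX.
set U := X :|: [set x; z; v].
set W := X :|: [set x; v].
have cU : 2 < #|U| by apply: leq_trans cX (subset_leq_card (subsetUl _ _)).
have nU : ~~ prime2 eqv U.
  apply/negP => pU; apply: S3X; exists [set x; z; v]; split => //.
  - by apply/subsetP => t; rewrite !inE => /orP[/orP[]|] /eqP ->.
  - have -> : [set x; z; v] = x |: (z |: [set v]) by apply/setP => t; rewrite !inE orbA.
    by rewrite !cardsU1 !inE cards1 (negbTE xz) (negbTE xv) zv.
move: nU; rewrite /prime2 cU /= => /forallPn [M].
rewrite negb_imply => /andP [mM]; rewrite !negb_or => /and3P [M0 MU M1].
have sWU : W \subset U.
  by apply/subsetP => t; rewrite !inE => /orP[->//|/orP[]->]; rewrite ?orbT.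
have mN := module_restrict sWU mM.
have [sMU HM] := (moduleP eqv U M).1 mM.
have UW : forall t, t \in U -> t \notin W -> t = z.
  move=> t; rewrite /U /W !inE => H; rewrite !negb_or => /and3P[tX tx tv].
  by move: H; rewrite (negbTE tX) (negbTE tx) (negbTE tv) /= ?orbF => /eqP.
case: (prime2P pW mN) => [N0 | NW | N1].
- exfalso.
  have sM : M \subset [set z].
    apply/subsetP => t tM; rewrite inE; apply/eqP; apply: UW; first exact: (subsetP sMU).
    by apply: contraT; rewrite negbK => tW; move/setP/(_ t): N0; rewrite inE tM tW inE.
  move: (subset_leq_card sM); rewrite cards1 leq_eqVlt ltnS leqn0 cards_eq0.
  by rewrite (negbTE M1) (negbTE M0).
- constructor 1.
  have WM : forall t, t \in W -> t \in M.
    by move=> t; rewrite /W -{1}NW inE => /andP[].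
  have zM : z \notin M.
    apply: contra MU => zM; rewrite eqEsubset sMU /=; apply/subsetP => t tU.
    case tW : (t \in W); first exact: WM.
    by rewrite (UW t tU (negbT tW)).
  move=> a b aW bW; apply: HM => //; first exact: WM. exact: WM.
  by rewrite !inE eqxx !orbT.
- move/eqP: N1 => /cards1P [w Nw].
  have : w \in M :&: W by rewrite Nw set11.
  rewrite inE => /andP [wM wW].
  have zM : z \in M.
    apply: contraT => zM.
    have eM : M :&: W = M.
      apply/setIidPl/subsetP => t tM; apply: contraT => tW.
      have tz := UW t (subsetP sMU t tM) tW.
      by move: zM; rewrite -tz tM.
    by move: M1; rewrite -eM Nw cards1.
  have Tw : twin eqv w z U.
    move=> s sU sw sz; apply: HM => //.
    apply: contra sw => sM.
    have sW : s \in W by apply: contraT => sW; move: sz; rewrite (UW s sU sW) eqxx.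
    have : s \in M :&: W by rewrite inE sM sW.
    by rewrite Nw inE.
  move: wW; rewrite !inE => /orP [wX | /orP [] /eqP ew].
  + constructor 2; by exists w.
  + exfalso; subst w.
    set S := X :|: [set v].
    have xS : x \notin S by rewrite !inE negb_or xX xv.
    have zS : z \notin S by rewrite !inE negb_or zX zv.
    have TS : twin eqv x z S.
      apply: twin_sub Tw; apply/subsetP => t; rewrite !inE => /orP[->//|->]; by rewrite !orbT.
    have := sw_prime E TS xS zS.
    have -> : x |: S = W by apply/setP => t; rewrite !inE; case: (t == x); case: (t \in X); case: (t == v).
    move=> /(_ pW) pZ; move: ngzv; rewrite /gamma_edge zX vX zv /=.
    have -> : X :|: [set z; v] = z |: S by apply/setP => t; rewrite !inE; case: (t == z); case: (t \in X); case: (t == v).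
    by rewrite pZ.
  + constructor 3; by subst w.
Qed.

Lemma ext_case (T : finType) (eqv : rel (T * T)) (X B : {set T}) x z v :
  is_2structure eqv -> prime2 eqv X -> S3 eqv X ->
  B = Ext eqv X -> x \in B -> z \in B ->
  gamma_edge eqv X x v -> ~~ gamma_edge eqv X z v -> v \notin X -> v \notin B -> False.
Proof.
move=> E pX S3X eB xB zB gx ngz vX vB.
move: (xB) (zB); rewrite eB !inE => /andP[xX _] /andP[zX pZ].
have xz : x != z by apply: contraNneq ngz => <-; rewrite gx.
have zv : z != v by apply: contraNneq vB => <-.
case: (key E pX S3X xX zX vX xz zv gx ngz) => [HA | [al alX Tw] | Tv].
- apply: (ext_false1 pX zX pZ); apply/moduleP; split; first exact: subsetUr.
  move=> a b t aX bX; rewrite !inE => /orP[/eqP->|->] // _.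
  by apply: HA; rewrite inE ?aX ?bX.
- apply: (ext_false2 E pX zX alX pZ); apply: twin_sub Tw.
  by apply/subsetP => t; rewrite !inE => /orP[->|->]; rewrite ?orbT.
- have TS : twin eqv z v X by apply: twin_sym E _; apply: twin_sub Tv; apply: subsetUl.
  have pV := sw_prime E TS zX vX pZ.
  by move: vB; rewrite eB inE vX pV.
Qed.

Lemma span_facts (T : finType) (eqv : rel (T * T)) (X : {set T}) z :
  module eqv (z |: X) X -> z \notin X ->
  forall b c, b \in X -> c \in X -> eqv (b,z) (c,z) && eqv (z,b) (z,c).
Proof.
case/moduleP => _ H zX b c bX cX; apply: H => //; by rewrite !inE eqxx.
Qed.

Lemma span_case (T : finType) (eqv : rel (T * T)) (X B : {set T}) x z v e f :
  is_2structure eqv -> prime2 eqv X -> S3 eqv X ->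
  is_class eqv e -> is_class eqv f ->
  B = spanXef eqv X e f -> x \in B -> z \in B ->
  gamma_edge eqv X x v -> ~~ gamma_edge eqv X z v -> v \notin X -> v \notin B ->
  ((z, x) \in e) /\ ((x, z) \in f).
Proof.
move=> E pX S3X ce cf eB xB zB gx ngz vX vB.
move: (xB) (zB); rewrite eB !inE => /andP[/andP[xX _] _] /andP[/andP[zX mZ] /forallP Hz].
have xz : x != z by apply: contraNneq ngz => <-; rewrite gx.
have zx : z != x by rewrite eq_sym.
have zv : z != v by apply: contraNneq vB => <-.
have hs := span_facts mZ zX.
have cX := prime_card pX.
case: (key E pX S3X xX zX vX xz zv gx ngz) => [HA | [al alX Tw] | Tv].
- have [a aX] : exists a, a \in X.
    by apply/set0Pn; rewrite -card_gt0; apply: leq_trans cX.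
  move: (Hz a); rewrite aX /= => /andP [h1 h2].
  have az : a != z by apply: neS zX aX.
  have za : z != a by rewrite eq_sym.
  have /andP[h3 h4] : eqv (a,z) (x,z) && eqv (z,a) (z,x).
    by apply: HA; rewrite !inE ?aX ?eqxx ?orbT.
  split; first exact: (@in_class _ _ _ _ (z,x) E ce h1 zx h4).
  exact: (@in_class _ _ _ _ (x,z) E cf h2 xz h3).
- exfalso; apply: (span_xal_false E pX alX zX hs); apply: twin_sub Tw; exact: subsetUl.
- exfalso.
  have TS : twin eqv z v X by apply: twin_sym E _; apply: twin_sub Tv; apply: subsetUl.
  move: vB; rewrite eB !inE vX /=; apply/negP/negPn; apply/andP; split.
    have := sw_module E TS zX vX mZ.
    suff -> : sw z v @: X = X by [].
    rewrite -[RHS]imset_id; apply: eq_in_imset => t tX; apply: swD; [exact: (neS zX tX) | exact: (neS vX tX)].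
  apply/forallP => a; apply/implyP => aX.
  move: (Hz a); rewrite aX /= => /andP [h1 h2].
  have az : a != z by apply: neS zX aX.
  have av : a != v by apply: neS vX aX.
  case/andP: (TS a aX az av) => h3 h4.
  apply/andP; split; first by apply: (in_class E ce h1) => //; rewrite /offdiag /= eq_sym.
  by apply: (in_class E cf h2).
Qed.

Lemma xal_case (T : finType) (eqv : rel (T * T)) (X B : {set T}) x z v a e f :
  is_2structure eqv -> prime2 eqv X -> S3 eqv X -> a \in X ->
  is_class eqv e -> is_class eqv f ->
  B = Xalef eqv X a e f -> x \in B -> z \in B ->
  gamma_edge eqv X x v -> ~~ gamma_edge eqv X z v -> v \notin X -> v \notin B ->
  ((z, x) \in f) /\ ((x, z) \in e).
Proof.
move=> E pX S3X aX ce cf eB xB zB gx ngz vX vB.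
move: (xB) (zB); rewrite eB !inE.
move=> /andP[/andP[xX _] /andP[xa ax]] /andP[/andP[zX mZ] /andP[za az]].
have xz : x != z by apply: contraNneq ngz => <-; rewrite gx.
have zx : z != x by rewrite eq_sym.
have zv : z != v by apply: contraNneq vB => <-.
have Ta : twin eqv a z X by apply: twin_sub (module_twin mZ); apply: subsetUr.
case: (key E pX S3X xX zX vX xz zv gx ngz) => [HA | [al alX Tw] | Tv].
- exfalso; apply: (span_xal_false E pX aX zX _ Ta) => b c bX cX.
  by apply: HA; rewrite inE ?bX ?cX.
- have [eal|nal] := eqVneq a al.
    subst al.
    have xa' : x != a by rewrite eq_sym; exact: (neS xX aX).
    have /andP[h1 h2] : eqv (a,x) (z,x) && eqv (x,a) (x,z).
      by apply: Tw; rewrite ?inE ?eqxx ?orbT.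
    split; first exact: (@in_class _ _ _ _ (z,x) E cf ax zx h1).
    exact: (@in_class _ _ _ _ (x,z) E ce xa xz h2).
  exfalso; apply: (xal_xal_false E pX aX alX nal zX Ta).
  apply: twin_sub Tw; exact: subsetUl.
- exfalso.
  have TS : twin eqv z v X by apply: twin_sym E _; apply: twin_sub Tv; apply: subsetUl.
  have az' : a != z by apply: neS zX aX.
  have av : a != v by apply: neS vX aX.
  move: vB; rewrite eB !inE vX /=; apply/negP/negPn; apply/andP; split.
    have := sw_module E TS zX vX mZ.
    by rewrite imsetU1 imset_set1 swL swD.
  case/andP: (TS a aX az' av) => h3 h4.
  apply/andP; split; first by apply: (in_class E ce za) => //; rewrite /offdiag /= eq_sym.
  by apply: (in_class E cf az).
Qed.

Theorem corollary3p4 (T : finType) (eqv : rel (T * T)) (X B : {set T}) :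
  is_2structure eqv ->
  X \proper [set: T] ->
  prime2 eqv X ->
  S3 eqv X ->
  in_q eqv X B ->
  forall v, v \in ~: X -> v \notin B ->
  let Np := [set x in B | gamma_edge eqv X x v] in
  let Nm := [set x in B | ~~ gamma_edge eqv X x v] in
  [/\ module eqv B Np, module eqv B Nm &
      (Np != set0 -> Nm != set0 ->
       (forall e f, is_class eqv e -> is_class eqv f ->
          B = spanXef eqv X e f ->
          forall z x, z \in Nm -> x \in Np -> ((z, x) \in e) /\ ((x, z) \in f)) /\
       (forall a e f, a \in X -> is_class eqv e -> is_class eqv f ->
          B = Xalef eqv X a e f ->
          forall z x, z \in Nm -> x \in Np -> ((z, x) \in f) /\ ((x, z) \in e)))].
Proof.
move=> E XT pX S3X qB v; rewrite inE => vX vB Np Nm.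
have inNp : forall t, t \in Np -> t \in B /\ gamma_edge eqv X t v.
  by move=> t; rewrite inE => /andP.
have inNm : forall t, t \in Nm -> t \in B /\ ~~ gamma_edge eqv X t v.
  by move=> t; rewrite inE => /andP.
have P : forall x1 x2 z1 z2, x1 \in Np -> x2 \in Np -> z1 \in Nm -> z2 \in Nm ->
    eqv (x1,z1) (x2,z2) && eqv (z1,x1) (z2,x2).
  move=> x1 x2 z1 z2 /inNp[x1B g1] /inNp[x2B g2] /inNm[z1B n1] /inNm[z2B n2].
  case: qB => _ [eB | [e [f [ce cf [eB | [a aX eB]]]]]].
  - exfalso; exact: (ext_case E pX S3X eB x1B z1B g1 n1 vX vB).
  - have [h1 h2] := span_case E pX S3X ce cf eB x1B z1B g1 n1 vX vB.
    have [h3 h4] := span_case E pX S3X ce cf eB x2B z2B g2 n2 vX vB.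
    by rewrite (class_eqv E cf h2 h4) (class_eqv E ce h1 h3).
  - have [h1 h2] := xal_case E pX S3X aX ce cf eB x1B z1B g1 n1 vX vB.
    have [h3 h4] := xal_case E pX S3X aX ce cf eB x2B z2B g2 n2 vX vB.
    by rewrite (class_eqv E ce h2 h4) (class_eqv E cf h1 h3).
split.
- apply/moduleP; split; first by apply/subsetP => t /inNp[].
  move=> x y t xN yN tB tN.
  have tNm : t \in Nm by rewrite inE tB; apply: contra tN => g; rewrite inE tB g.
  exact: P.
- apply/moduleP; split; first by apply/subsetP => t /inNm[].
  move=> x y t xN yN tB tN.
  have tNp : t \in Np by rewrite inE tB; apply: contraR tN => g; rewrite inE tB g.
  by case/andP: (P t t x y tNp tNp xN yN) => h1 h2; rewrite h1 h2.
- move=> _ _; split.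
  + move=> e f ce cf eB z x /inNm[zB n] /inNp[xB g].
    exact: (span_case E pX S3X ce cf eB xB zB g n vX vB).
  + move=> a e f aX ce cf eB z x /inNm[zB n] /inNp[xB g].
    exact: (xal_case E pX S3X aX ce cf eB xB zB g n vX vB).
Qed.
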